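(* For $n\ge1$, $\lambda_n'(a)=\sum_{k=1}^{n-1}k\,\lambda_{n-k}(a)\lambda_k(a)$; moreover $\lambda_n(0)=(-1)^{n-1}/n$ and $\lambda_1(a)=1$.
   Context: Let $L(a,t)=\sum_{n\ge1}\lambda_n(a)t^n\in\mathbb Q[a][[t]]$ be the compositional inverse (in $t$) of $e^{-at}(e^t-1)$, equivalently the unique such series with $e^{L(a,t)}(1-te^{(a-1)L(a,t)})=1$. $\lambda_n'$ denotes the derivative in $a$. *)

(* Defs.v *)
From mathcomp Require Import all_boot all_order all_algebra.
Set Implicit Arguments. Unset Strict Implicit. Unset Printing Implicit Defensive.
Import GRing.Theory Num.Theory.
Local Open Scope ring_scope.

(* We work in Q[a][[t]]: elements of Q[a] are {poly rat} (variable 'X = a);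
   a series in t is given by its coefficient sequence nat -> {poly rat};
   truncations are polynomials in {poly {poly rat}} (variable 'X = t). *)

(* coefficient of t^i in e^{-a t} : (-a)^i / i! *)
Definition expma_coef (i : nat) : {poly rat} :=
  ((i`!)%:R^-1 : rat) *: (- 'X) ^+ i.

(* coefficient of t^i in e^t - 1 : [i >= 1] / i! *)
Definition expm1_coef (i : nat) : {poly rat} :=
  if (0 < i)%N then ((i`!)%:R^-1 : rat)%:P else 0.

(* coefficient of t^m in f(a,t) = e^{-a t} (e^t - 1)  (Cauchy product) *)
Definition fcoef (m : nat) : {poly rat} :=
  \sum_(j < m.+1) expma_coef j * expm1_coef (m - j).

Definition trunc_series (lam : nat -> {poly rat}) (N : nat) : {poly {poly rat}} :=
  \poly_(k < N.+1) lam k.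

(* lam is the coefficient sequence of the compositional inverse (in t) of f:
   lam 0 = 0 (so L = sum_{n>=1} lam n t^n) and f(a, L(a,t)) = t as formal
   power series, i.e. for every N, the coefficients of t^n, n <= N, of
   sum_{m<=N} fcoef m * (L mod t^{N+1})^m agree with those of t. *)
Definition is_comp_inverse (lam : nat -> {poly rat}) : Prop :=
  lam 0%N = 0 /\
  forall N n : nat, (n <= N)%N ->
    (\sum_(m < N.+1) fcoef m *: (trunc_series lam N) ^+ m)`_n = (n == 1%N)%:R.

(* Main.v *)
Require Import Defs.
From mathcomp Require Import all_boot all_order all_algebra.
From mathcomp Require Import ring lra zify.
Import GRing.Theory Num.Theory.
Set Implicit Arguments. Unset Strict Implicit.
Local Open Scope ring_scope.

Section Low.
Variable R : comNzRingType.
Implicit Types p q r : {poly R}.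

Definition low (k : nat) p := forall i, (i < k)%N -> p`_i = 0.

Lemma low0 p : low 0 p. Proof. by []. Qed.
Lemma lowW a b p : (b <= a)%N -> low a p -> low b p.
Proof. by move=> ba h i ib; apply: h; apply: leq_trans ba. Qed.
Lemma lowD k p q : low k p -> low k q -> low k (p + q).
Proof. by move=> hp hq i ik; rewrite coefD hp // hq // addr0. Qed.
Lemma lowN k p : low k p -> low k (- p).
Proof. by move=> hp i ik; rewrite coefN hp // oppr0. Qed.
Lemma lowB k p q : low k p -> low k q -> low k (p - q).
Proof. by move=> hp hq; apply: lowD => //; apply: lowN. Qed.
Lemma lowM a b p q : low a p -> low b q -> low (a + b) (p * q).
Proof.
move=> hp hq i ik; rewrite coefM big1 // => j _.
have [ja|ja] := ltnP j a; first by rewrite hp // mul0r.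
rewrite hq ?mulr0 //; have := ltn_ord j; lia.
Qed.
Lemma lowMl k p q : low k q -> low k (p * q).
Proof. by move=> hq; apply: (@lowM 0 k) => //. Qed.
Lemma lowMr k p q : low k p -> low k (p * q).
Proof. by move=> hp; rewrite mulrC; apply: lowMl. Qed.
Lemma lowZ k (c : R) p : low k p -> low k (c *: p).
Proof. by move=> hp i ik; rewrite coefZ hp // mulr0. Qed.
Lemma low_sum k (I : finType) (F : I -> {poly R}) :
  (forall i, low k (F i)) -> low k (\sum_i F i).
Proof.
move=> h; apply: (big_ind (low k)).
- by move=> i _; rewrite coef0.
- by move=> x y; apply: lowD.
- move=> j *; exact: h.
Qed.
Lemma lowX k p : low 1 p -> low k (p ^+ k).
Proof.
move=> hp; elim: k => [|k IH]; first exact: low0.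
by rewrite exprS; apply: (@lowM 1 k).
Qed.
Lemma lowXX k m p q : low k (p - q) -> low k (p ^+ m - q ^+ m).
Proof.
move=> h; elim: m => [|m IH]; first by rewrite !expr0 subrr; move=> i _; rewrite coef0.
have -> : p ^+ m.+1 - q ^+ m.+1 = p * (p ^+ m - q ^+ m) + (p - q) * q ^+ m.
  by rewrite !exprS; ring.
by apply: lowD; [apply: lowMl | apply: lowMr].
Qed.
Lemma low_deriv k p : low k.+1 p -> low k p^`().
Proof. by move=> h i ik; rewrite coef_deriv h // mul0rn. Qed.
Lemma lowXM k p : low k p -> low k.+1 ('X * p).
Proof. by move=> h [|i] ik; rewrite coefXM //= h. Qed.

Lemma low_cancel k (g x : {poly R}) : g`_0 = 1 -> low k (g * x) -> low k x.
Proof.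
move=> g0; elim: k => [|k IH] h; first exact: low0.
have hk : low k x by apply: IH; apply: lowW h.
move=> i; rewrite ltnS leq_eqVlt => /orP [/eqP ->|]; last exact: hk.
have := h k (ltnSn k); rewrite coefM big_ord_recl g0 mul1r subn0 big1 ?addr0 //.
move=> j _; rewrite hk ?mulr0 // lift0. have := ltn_ord j. lia.
Qed.

Definition Fs (c : nat -> R) N p := \sum_(m < N.+1) c m *: p ^+ m.
Definition Fd (c : nat -> R) N p := \sum_(m < N.+1) (c m *+ m) *: p ^+ m.-1.

Lemma Fs_deriv c N p : (Fs c N p)^`() = Fd c N p * p^`().
Proof.
rewrite /Fs /Fd raddf_sum mulr_suml; apply: eq_bigr => m _.
by rewrite /= derivZ deriv_exp -!mul_polyC polyCMn mulrnAr !mulrnAl -mulrA [_ * p^`()]mulrC.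
Qed.

End Low.

Section Da.
Variable R : comNzRingType.
Implicit Types p q : {poly {poly R}}.
Definition Da p : {poly {poly R}} := map_poly (@deriv R) p.

Lemma coef_Da p i : (Da p)`_i = (p`_i)^`().
Proof. by rewrite /Da coef_map. Qed.
Lemma DaD p q : Da (p + q) = Da p + Da q.
Proof. by apply/polyP => i; rewrite coefD !coef_Da coefD derivD. Qed.
Lemma DaN p : Da (- p) = - Da p.
Proof. by apply/polyP => i; rewrite coefN !coef_Da coefN derivN. Qed.
Lemma DaB p q : Da (p - q) = Da p - Da q.
Proof. by rewrite DaD DaN. Qed.
Lemma DaM p q : Da (p * q) = Da p * q + p * Da q.
Proof.
apply/polyP => i; rewrite coefD coef_Da !coefM -big_split /= raddf_sum.
apply: eq_bigr => j _; by rewrite /= derivM !coef_Da.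
Qed.
Lemma DaC (c : {poly R}) : Da c%:P = (c^`())%:P.
Proof. by rewrite /Da map_polyC. Qed.
Lemma DaZ (c : {poly R}) p : Da (c *: p) = c^`() *: p + c *: Da p.
Proof. by rewrite -!mul_polyC DaM DaC. Qed.
Lemma DaX : Da 'X = 0.
Proof. by apply/polyP => i; rewrite coef_Da coefX coef0; case: (i == 1)%N; rewrite ?derivC ?deriv0. Qed.
Lemma Da1 : Da 1 = 0.
Proof. by rewrite -polyC1 DaC derivC. Qed.
Lemma DaXn p m : Da (p ^+ m) = (p ^+ m.-1 * Da p) *+ m.
Proof.
elim: m => [|m IH]; first by rewrite expr0 Da1 mulr0n.
rewrite exprS DaM IH; case: m IH => [|m] IH; first by rewrite !mulr0n expr0 mulr0 addr0 mul1r mulr1n mulr1.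
by rewrite /= -mulrnAr mulrA [Da p * _]mulrC mulrnAr -exprS -mulrS.
Qed.
Lemma low_Da k p : low k p -> low k (Da p).
Proof. by move=> h i ik; rewrite coef_Da h // deriv0. Qed.

Lemma Da_Fs (c : nat -> {poly R}) N p :
  Da (Fs c N p) = Fs (fun m => (c m)^`()) N p + Fd c N p * Da p.
Proof.
rewrite /Fs /Fd mulr_suml.
have -> : forall (F : 'I_N.+1 -> _), Da (\sum_m F m) = \sum_m Da (F m).
  by move=> F; apply: (big_morph Da DaD); rewrite /Da map_poly0.
rewrite -big_split; apply: eq_bigr => m _ /=.
by rewrite DaZ DaXn -scalerMnl -scalerMnr scalerAl mulrnAl.
Qed.
End Da.

Lemma expma0 : expma_coef 0 = 1.
Proof. by rewrite /expma_coef fact0 invr1 scale1r expr0. Qed.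

Lemma expma_deriv j : (expma_coef j.+1)^`() = - expma_coef j.
Proof.
rewrite /expma_coef derivZ deriv_exp derivN derivX /= -scalerN.
rewrite mulN1r -scaler_nat scalerA; congr (_ *: _).
by rewrite factS natrM invfM mulrAC mulVf ?mul1r // pnatr_eq0.
Qed.

Lemma expm1_const i : exists c : rat, expm1_coef i = c%:P.
Proof. rewrite /expm1_coef; case: (0 < i)%N; [by eexists | by exists 0]. Qed.

Lemma fcoef0 : fcoef 0 = 0.
Proof. by rewrite /fcoef big_ord1 /expm1_coef /= mulr0. Qed.

Lemma fcoef1 : fcoef 1 = 1.
Proof.
rewrite /fcoef big_ord_recl big_ord1 /= expma0 /expm1_coef /= mulr0 addr0 mul1r.
by rewrite /= invr1.
Qed.

Lemma fcoef_deriv m : (fcoef m.+1)^`() = - fcoef m.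
Proof.
rewrite /fcoef raddf_sum big_ord_recl /= derivM expma0 derivC mul0r add0r.
have [c ->] := expm1_const m.+1; rewrite derivC mulr0 add0r -sumrN.
apply: eq_bigr => j _; rewrite derivM /bump leq0n add1n expma_deriv subSS.
have [d ->] := expm1_const (m - j); by rewrite derivC mulr0 addr0 mulNr.
Qed.

Lemma fcoef_deriv0 : (fcoef 0)^`() = 0.
Proof. by rewrite fcoef0 deriv0. Qed.

Lemma fcoef_at0 m : (fcoef m).[0] = if (0 < m)%N then (m`!%:R)^-1 else 0.
Proof.
rewrite /fcoef horner_sum big_ord_recl /= hornerM expma0 hornerC mul1r subn0.
rewrite big1 ?addr0; first by rewrite /expm1_coef; case: (0 < m)%N; rewrite hornerC.
move=> j _; rewrite hornerM /expma_coef hornerZ horner_exp hornerN hornerX oppr0.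
by rewrite /bump leq0n add1n expr0n /= mulr0 mul0r.
Qed.

Section Main.
Variable lam : nat -> {poly rat}.
Hypothesis H : is_comp_inverse lam.
Local Notation P N := (trunc_series lam N).

Lemma hlow N : low N.+1 (Fs fcoef N (P N) - 'X).
Proof. by move=> n nN; rewrite coefB coefX (H.2 N n) ?subrr. Qed.

Lemma P_low1 N : low 1 (P N).
Proof. by move=> [|//] _; rewrite coef_poly /= H.1. Qed.

Lemma Fs_split (R : comNzRingType) (c : nat -> R) M p :
  Fs c M.+1 p = Fs c M p + c M.+1 *: p ^+ M.+1.
Proof. by rewrite /Fs big_ord_recr. Qed.

Lemma Fs_dfcoef M (p : {poly {poly rat}}) :
  Fs (fun m => (fcoef m)^`()) M.+1 p = - (p * Fs fcoef M p).
Proof.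
rewrite /Fs big_ord_recl /= fcoef_deriv0 scale0r add0r mulr_sumr -sumrN.
apply: eq_bigr => i _; rewrite /bump leq0n add1n fcoef_deriv exprS.
by rewrite scaleNr scalerAr.
Qed.

Lemma Fd0 M (p : {poly {poly rat}}) : low 1 p -> (Fd fcoef M.+1 p)`_0 = 1.
Proof.
move=> hp; rewrite /Fd coef_sum big_ord_recl big_ord_recl /= fcoef0 fcoef1.
rewrite mul0rn scale0r coef0 add0r mulr1n expr0 scale1r coef1 /=.
rewrite big1 ?addr0 // => i _; rewrite coefZ.
rewrite /bump !leq0n !add1n /=.
by rewrite (@lowX _ i.+1 p hp 0) ?mulr0.
Qed.

Lemma alg_id (R : comNzRingType) (G DaP p X' Fp FM c Pm D : R) :
  Fp = - (p * (FM - c * Pm)) ->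
  G * (DaP - p * (X' * D)) =
  (Fp + G * DaP) + p * (FM - X') - c * (p * Pm) - p * (X' * (G * D - 1)).
Proof. by move=> ->; ring. Qed.

Lemma deriv_formula M :
  (lam M.+1)^`() = \sum_(1 <= k < M.+1) k%:R *: (lam (M.+1 - k)%N * lam k).
Proof.
set N := M.+1; set p := P N; set G := Fd fcoef N p.
have hp := @P_low1 N; have hA := @hlow N.
have hT : low N (G * p^`() - 1).
  by have := low_deriv hA; rewrite derivB Fs_deriv derivX.
have hD : low N.+1 (Fs (fun m => (fcoef m)^`()) N p + G * Da p).
  by have := low_Da hA; rewrite DaB DaX subr0 Da_Fs.
have hX : low N.+1 (G * (Da p - p * ('X * p^`()))).
  rewrite (@alg_id _ G (Da p) p 'X (Fs (fun m => (fcoef m)^`()) N p) (Fs fcoef N p) (fcoef N)%:P (p ^+ N) p^`()).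
  - apply: lowB; last by apply: lowMl; apply: lowXM.
    apply: lowB; first by apply: lowD => //; apply: lowMl.
    by apply: lowMl; rewrite -exprS; apply: lowX.
  - by rewrite Fs_dfcoef Fs_split mul_polyC addrK.
have := low_cancel (Fd0 M hp) hX (ltnSn N).
rewrite coefB coef_Da coef_poly ltnSn => /eqP; rewrite subr_eq0 => /eqP ->.
rewrite mulrC coefM -(big_mkord xpredT (fun j => ('X * p^`())`_j * p`_(N - j))).
rewrite -/N big_ltn // big_nat_recr //= coefXM eqxx mul0r add0r.
rewrite subnn coef_poly /= H.1 mulr0 addr0.
apply: eq_big_nat => k /andP [k1 kN].
rewrite coefXM; case: k k1 kN => [//|k] _ kN /=.
rewrite coef_deriv !coef_poly ltnS (ltnW kN) ifT; last by lia.
by rewrite mulrnAl scaler_nat mulrC.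
Qed.


Lemma lam1 : lam 1 = 1.
Proof.
have := H.2 1%N 1%N (leqnn 1); rewrite big_ord_recl big_ord1 /= fcoef0 fcoef1.
by rewrite scale0r add0r scale1r expr1 coef_poly.
Qed.

Local Notation ev := (map_poly (horner_eval (0 : rat))).

Lemma ev_low k (p : {poly {poly rat}}) : low k p -> low k (ev p).
Proof. by move=> h i ik; rewrite coef_map h //= rmorph0. Qed.

Lemma coefQ N j : (ev (P N))`_j = if (j < N.+1)%N then (lam j).[0] else 0.
Proof. by rewrite coef_map coef_poly /=; case: ifP => _; rewrite /horner_eval ?horner0. Qed.

Lemma ev_Fs (c : nat -> {poly rat}) N p :
  ev (Fs c N p) = Fs (fun m => (c m).[0]) N (ev p).
Proof.
rewrite /Fs rmorph_sum; apply: eq_bigr => m _.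
rewrite -!mul_polyC rmorphM rmorphXn; congr (_ * _); exact: (map_polyC (horner_eval (0:rat))).
Qed.

Lemma alg2 (R : comNzRingType) (a b x : R) : 1 + a - (1 + x) = a + b - x - b.
Proof. by ring. Qed.

Lemma alg3 (R : comNzRingType) (g y d : R) : y * d - 1 = (g * d - 1) - (g - y) * d.
Proof. by ring. Qed.

Definition e0 m := (fcoef m).[0].

Lemma Fd_e M (q : {poly rat}) : Fd e0 M.+1 q = 1 + Fs e0 M q.
Proof.
rewrite /Fd /Fs big_ord_recl big_ord_recl [in RHS]big_ord_recl /=.
rewrite /e0 !fcoef_at0 /= mul0rn !scale0r !add0r mulr1n expr0 invr1 scale1r.
congr (_ + _); apply: eq_bigr => i _; rewrite /bump !leq0n !add1n /= !fcoef_at0 /=.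
rewrite add0n; congr (_ *: _); rewrite factS natrM invfM -[_ *+ i.+2]mulr_natr mulrAC mulVf ?mul1r //.
by rewrite pnatr_eq0.
Qed.

Lemma mu_rec M k : (k < M.+1)%N ->
  ((1 + 'X) * (ev (P M.+1))^`())`_k = (k == 0)%:R.
Proof.
set N := M.+1; set q := ev (P N).
have hA : low N.+1 (Fs e0 N q - 'X).
  by have := ev_low (@hlow N); rewrite rmorphB /= map_polyX ev_Fs.
have hT : low N (Fd e0 N q * q^`() - 1).
  by have := low_deriv hA; rewrite derivB Fs_deriv derivX.
have hG : low N (Fd e0 N q - (1 + 'X)).
  rewrite Fd_e.
  have -> : 1 + Fs e0 M q - (1 + 'X) = (Fs e0 N q - 'X) - e0 N *: q ^+ N.
    by rewrite Fs_split (alg2 _ (e0 N *: q ^+ N)).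
  apply: lowB; first exact: (lowW (leqnSn N) hA).
  apply: lowZ; apply: lowX => i; case: i => // _; rewrite coefQ /= H.1 horner0 //.
have hW : low N ((1 + 'X) * q^`() - 1).
  have -> : (1 + 'X) * q^`() - 1 = (Fd e0 N q * q^`() - 1) - (Fd e0 N q - (1 + 'X)) * q^`().
    by rewrite (alg3 (Fd e0 N q)).
  by apply: lowB => //; apply: lowMr.
move=> kN; have := hW k kN; rewrite coefB coef1 => /eqP; rewrite subr_eq0 => /eqP.
by rewrite eq_sym; case: (k == 0)%N.
Qed.

Lemma mu_val j : (lam j.+1).[0] = (-1) ^+ j / j.+1%:R.
Proof.
elim: j => [|j IH]; first by rewrite lam1 -polyC1 hornerC expr0 divr1.
have := mu_rec (ltnSn j.+1).
rewrite mulrDl mul1r coefD coefXM /= !coef_deriv !coefQ !ltnS leqnn ltnW //.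
move=> /eqP; rewrite addr_eq0 => /eqP h.
have hj : (j.+2%:R : rat) != 0 by rewrite pnatr_eq0.
have -> : (lam j.+2).[0] = - ((lam j.+1).[0] *+ j.+1) / j.+2%:R.
  by rewrite -h -[_ *+ _]mulr_natr mulfK.
by rewrite IH -mulNrn -[_ *+ _]mulr_natr mulNr mulfVK ?pnatr_eq0 // exprS mulN1r.
Qed.

End Main.

Definition seqnext (s : seq {poly rat}) : {poly rat} :=
  (size s == 1)%N%:R - (Fs fcoef (size s) (Poly s))`_(size s).
Fixpoint seqlam n := if n is k.+1 then rcons (seqlam k) (seqnext (seqlam k)) else [:: 0].
Definition lam0 n := nth 0 (seqlam n) n.

Lemma size_seqlam n : size (seqlam n) = n.+1.
Proof. by elim: n => //= n IH; rewrite size_rcons IH. Qed.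

Lemma nth_seqlam n i : (i <= n)%N -> nth 0 (seqlam n) i = lam0 i.
Proof.
elim: n => [|n IH]; first by rewrite leqn0 => /eqP ->.
rewrite leq_eqVlt => /orP [/eqP -> //|lt].
by rewrite /= nth_rcons size_seqlam lt IH.
Qed.

Lemma Poly_seqlam k : Poly (seqlam k) = trunc_series lam0 k.
Proof.
apply/polyP => i; rewrite coef_Poly coef_poly.
case: ifP => h; first by rewrite nth_seqlam.
by rewrite nth_default // size_seqlam leqNgt h.
Qed.

Lemma lam00 : lam0 0 = 0. Proof. by []. Qed.

Lemma lam0S k : lam0 k.+1 = (k.+1 == 1)%N%:R - (Fs fcoef k.+1 (trunc_series lam0 k))`_k.+1.
Proof.
by rewrite /lam0 /= nth_rcons size_seqlam ltnn eqxx /seqnext size_seqlam Poly_seqlam.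
Qed.

Section G.
Variable R : comNzRingType.
Implicit Types p q : {poly R}.

Lemma Fs_indep (c : nat -> R) n d p : low 1 p ->
  (Fs c (n + d) p)`_n = (Fs c n p)`_n.
Proof.
move=> hp; elim: d => [|d IH]; first by rewrite addn0.
rewrite addnS Fs_split coefD IH coefZ (@lowX _ (n + d).+1 p hp n) ?mulr0 ?addr0 //.
by rewrite ltnS leq_addr.
Qed.

Lemma Fs_close (c : nat -> R) n p q : low n.+1 (p - q) ->
  (Fs c n p)`_n = (Fs c n q)`_n.
Proof.
move=> h; apply/eqP; rewrite -subr_eq0 -coefB; apply/eqP.
have : low n.+1 (Fs c n p - Fs c n q).
  rewrite /Fs -sumrB; apply: low_sum => m; rewrite -scalerBr; apply: lowZ.
  exact: lowXX.
by move=> h2; apply: h2.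
Qed.

Lemma Fs_bump (c : nat -> R) k r d : low 1 r -> low k.+1 d ->
  (Fs c k.+1 (r + d))`_k.+1 = (Fs c k.+1 r)`_k.+1 + c 1%N * d`_k.+1.
Proof.
move=> hr hd.
suff : (Fs c k.+1 (r + d) - Fs c k.+1 r)`_k.+1 = c 1%N * d`_k.+1.
  by rewrite coefB => <-; ring.
rewrite /Fs -sumrB coef_sum big_ord_recl big_ord_recl /= !expr0 subrr coef0 add0r.
rewrite /bump /= !expr1 -scalerBr coefZ [r + d]addrC addrK big1 ?addr0 //.
move=> i _; rewrite -scalerBr coefZ !add1n.
have hrd : low 1 (d + r) by apply: lowD => //; apply: lowW hd.
have -> : (d + r) ^+ i.+2 - r ^+ i.+2 =
    (d + r) * ((d + r) ^+ i.+1 - r ^+ i.+1) + d * r ^+ i.+1.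
  by rewrite !(exprS _ i.+1); ring.
rewrite coefD (@lowM _ 1 k.+1) ?add1n //; last first.
  by apply: lowXX; rewrite addrK.
rewrite (@lowM _ k.+1 i.+1 _ _ hd (@lowX _ i.+1 r hr)) ?addr0 ?mulr0 //.
by rewrite -addSnnS leq_addr.
Qed.
End G.

Lemma trunc_low1 k : low 1 (trunc_series lam0 k).
Proof. by move=> [|//] _; rewrite coef_poly. Qed.

Lemma trunc_S k : trunc_series lam0 k.+1 = trunc_series lam0 k + lam0 k.+1 *: 'X^(k.+1).
Proof.
apply/polyP => i; rewrite coefD !coef_poly coefZ coefXn.
have [->|ne] := eqVneq i k.+1; first by rewrite ltnn ltnSn mulr1 add0r.
rewrite mulr0 addr0; case: (ltnP i k.+1) => h1; first by (rewrite ifT; last lia).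
have h2 : (k.+2 <= i)%N by lia.
by rewrite ltnNge h2.
Qed.

Lemma lam0_inv : is_comp_inverse lam0.
Proof.
split=> // N n nN.
have -> : (Fs fcoef N (trunc_series lam0 N))`_n = (Fs fcoef n (trunc_series lam0 n))`_n.
  have := @Fs_indep _ fcoef n (N - n) _ (trunc_low1 N); rewrite subnKC // => ->.
  apply: Fs_close => i ilt; rewrite coefB !coef_poly ilt.
  by rewrite ifT ?subrr //; lia.
case: n nN => [_|k _].
  by rewrite /Fs big_ord1 fcoef0 scale0r coef0.
rewrite trunc_S Fs_bump; last first.
- by move=> i ik; rewrite coefZ coefXn ltn_eqF // mulr0.
- exact: trunc_low1.
rewrite fcoef1 mul1r coefZ coefXn eqxx mulr1.
by rewrite [_ + lam0 _]addrC lam0S subrK.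
Qed.

Theorem lemma6p8 :
  (exists lam : nat -> {poly rat}, is_comp_inverse lam) /\
  forall lam : nat -> {poly rat}, is_comp_inverse lam ->
    (forall n : nat, (1 <= n)%N ->
       (lam n)^`() = \sum_(1 <= k < n) k%:R *: (lam (n - k)%N * lam k)) /\
    (forall n : nat, (1 <= n)%N ->
       (lam n).[0] = (-1) ^+ (n - 1) / n%:R) /\
    lam 1%N = 1.
Proof.
split; first by exists lam0; exact: lam0_inv.
move=> lam H; split; [|split].
- by move=> [//|M] _; rewrite (deriv_formula H M).
- by move=> [//|j] _; rewrite (mu_val H j) subSS subn0.
- exact: lam1 H.
Qed.
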